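(* If Algorithm 1 is run for any integer $T\ge\frac{2w^2\log(n/\epsilon)}{\epsilon^2}$ iterations, then for every $i\in[n]$, $\Pr[S_i-U_i\ge\epsilon T]\le\frac{\epsilon}{n}$.
   Context: Standing setup: $A\in\mathbb{R}^{m\times n}_{\ge 0}$ has no zero column and is normalized so that $\min_{i\in[n]}\|A_{:i}\|_\infty=1$, where $A_{:i}$ denotes the $i$-th column. $\epsilon\in(0,1/2]$. $\log$ is natural unless written $\log_2$. $\mu=\frac{\epsilon}{4\log(nm/\epsilon)}$, $p_j(x)=\exp\big(\frac{1}{\mu}((Ax)_j-1)\big)$, $f_\mu(x)=-\mathbf 1^Tx+\mu\sum_jp_j(x)$, $\nabla_i f_\mu(x)=-1+\sum_jA_{ji}p_j(x)$. Algorithm 1 with $T$ iterations: set $\alpha=\mu/20$, $w=\lceil\log_2(1/\epsilon)\rceil$, $x_0[i]=\frac{1-\epsilon/2}{n\|A_{:i}\|_\infty}$. For $k=0,\dots,T-1$: choose $t_k\in\{0,\dots,w-1\}$ uniformly at random, independently of the past; writing $g_i=\nabla_i f_\mu(x_k)$, define $\xi_k[i]=0$ if $|g_i|\le\epsilon$, $\xi_k[i]=g_i$ if $\epsilon<|g_i|\le 1$, $\xi_k[i]=1$ if $g_i>1$; $\xi^{(t)}_k[i]=\xi_k[i]$ if $\epsilon2^t<|\xi_k[i]|\le\epsilon2^{t+1}$ and $0$ otherwise; $x_{k+1}[i]=x_k[i]\exp(-\alpha\,\xi^{(t_k)}_k[i])$. Bucket indicators: for each $k,i$, let $b_k(i)\in\{0,\dots,w-1\}$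 be the unique $t$ with $\epsilon2^t<|\xi_k[i]|\le\epsilon2^{t+1}$ if $\xi_k[i]\ne0$, and $b_k(i)=0$ if $\xi_k[i]=0$; let $Z^{(i)}_k=1$ if $t_k=b_k(i)$ and $0$ otherwise. Define $S_i=w\sum_{k=0}^{T-1}Z^{(i)}_k\big(\min\{\nabla_i f_\mu(x_k),1\}+\epsilon\big)$ and $U_i=\sum_{k=0}^{T-1}\big(\min\{\nabla_i f_\mu(x_k),1\}+\epsilon\big)$. *)

(* Defs.v *)
From Stdlib Require Import Reals Lra Lia List.
Import ListNotations.
Open Scope R_scope.

(* A matrix A in R^{m x n} is a function A j i (row j < m, column i < n). *)

Definition rsum (m : nat) (f : nat -> R) : R :=
  fold_right Rplus 0 (map f (seq 0 m)).

Definition colnorm (A : nat -> nat -> R) (m i : nat) : R :=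
  fold_right Rmax 0 (map (fun j => Rabs (A j i)) (seq 0 m)).

Definition valid_matrix (A : nat -> nat -> R) (m n : nat) : Prop :=
  (forall j i, (j < m)%nat -> (i < n)%nat -> 0 <= A j i) /\
  (forall i, (i < n)%nat -> exists j, (j < m)%nat /\ A j i <> 0) /\
  (* min_{i in [n]} ||A_{:i}||_inf = 1 *)
  (forall i, (i < n)%nat -> 1 <= colnorm A m i) /\
  (exists i, (i < n)%nat /\ colnorm A m i = 1).

Definition log2 (x : R) : R := ln x / ln 2.

Definition Rceil (x : R) : Z := (- Int_part (- x))%Z.

Section Alg.
Variables (A : nat -> nat -> R) (m n : nat) (eps : R).

Definition mu : R := eps / (4 * ln (INR n * INR m / eps)).

Definition Ax (x : nat -> R) (j : nat) : R := rsum n (fun i => A j i * x i).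

Definition pj (x : nat -> R) (j : nat) : R := exp ((1 / mu) * (Ax x j - 1)).

Definition f_mu (x : nat -> R) : R :=
  - rsum n x + mu * rsum m (fun j => pj x j).

Definition grad (x : nat -> R) (i : nat) : R :=
  -1 + rsum m (fun j => A j i * pj x j).

Definition alpha : R := mu / 20.

Definition w : nat := Z.to_nat (Rceil (log2 (1 / eps))).

Definition x0 (i : nat) : R := (1 - eps / 2) / (INR n * colnorm A m i).

Definition xi (x : nat -> R) (i : nat) : R :=
  let g := grad x i in
  if Rle_dec (Rabs g) eps then 0
  else if Rlt_dec 1 g then 1
  else g.

Definition in_bucket (t : nat) (v : R) : Prop :=
  eps * 2 ^ t < Rabs v <= eps * 2 ^ (S t).

Definition in_bucket_dec (t : nat) (v : R) : bool :=
  if Rlt_dec (eps * 2 ^ t) (Rabs v) then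
    if Rle_dec (Rabs v) (eps * 2 ^ (S t)) then true else false
  else false.

Definition xit (t : nat) (x : nat -> R) (i : nat) : R :=
  if in_bucket_dec t (xi x i) then xi x i else 0.

(* iterate x_k given the random choices ts = [t_0; t_1; ...] *)
Fixpoint iterx (ts : list nat) (k : nat) : nat -> R :=
  match k with
  | O => x0
  | S k' => fun i => iterx ts k' i * exp (- alpha * xit (nth k' ts O) (iterx ts k') i)
  end.

Fixpoint find_bucket (lo cnt : nat) (v : R) : nat :=
  match cnt with
  | O => O
  | S c => if in_bucket_dec lo v then lo else find_bucket (S lo) c v
  end.

Definition bucket (v : R) : nat :=
  if Req_EM_T v 0 then O else find_bucket O w v.

Definition Zind (ts : list nat) (k i : nat) : R :=
  if Nat.eq_dec (nth k ts O) (bucket (xi (iterx ts k) i)) then 1 else 0.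

Definition S_i (T : nat) (ts : list nat) (i : nat) : R :=
  INR w * rsum T (fun k => Zind ts k i * (Rmin (grad (iterx ts k) i) 1 + eps)).

Definition U_i (T : nat) (ts : list nat) (i : nat) : R :=
  rsum T (fun k => Rmin (grad (iterx ts k) i) 1 + eps).

End Alg.

Fixpoint all_seqs (w T : nat) : list (list nat) :=
  match T with
  | O => [[]]
  | S T' => flat_map (fun a => map (cons a) (all_seqs w T')) (seq 0 w)
  end.

(* Probability of event E (a boolean predicate on the choice sequence) when
   t_0..t_{T-1} are i.i.d. uniform on {0..w-1}: (#favourable sequences) / w^T *)
Definition prob_unif (w T : nat) (E : list nat -> bool) : R :=
  fold_right Rplus 0
    (map (fun ts => if E ts then 1 else 0) (all_seqs w T)) / (INR w ^ T).

Definition Rgeb (a b : R) : bool := if Rle_dec b a then true else false.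

(* Main.v *)
Require Import Defs.
From Stdlib Require Import Reals Lra Lia List.
Import ListNotations.
Open Scope R_scope.

Lemma exp_le_mono x y : x <= y -> exp x <= exp y.
Proof. intros H; destruct (Req_dec x y); [subst; lra| apply Rlt_le, exp_increasing; lra]. Qed.

Lemma exp_pow_mul z T : (exp z)^T = exp (INR T * z).
Proof. induction T. simpl. rewrite Rmult_0_l, exp_0; auto.
  rewrite S_INR, <- tech_pow_Rmult, IHT, <- exp_plus. f_equal; ring. Qed.

Lemma poly_bd u : -1/5 <= u <= 1/5 -> 1 <= (1 - u/4)^4 * (1 + u + 4/5*u^2).
Proof. intros H.
  assert (E: (1 - u/4)^4 * (1 + u + 4/5*u^2) - 1 = u^2 * (7/40 - 39/80*u + (3/10 - 1/16 + 1/256)*u^2 + (-1/20+1/256)*u^3 + 4/5/256*u^4)) by field.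
  assert (0 <= u^2 * (7/40 - 39/80*u + (3/10 - 1/16 + 1/256)*u^2 + (-1/20+1/256)*u^3 + 4/5/256*u^4)).
  { apply Rmult_le_pos. nra.
    assert (0<= u^2) by nra. assert (u^3 <= 1/125) by nra. assert (-1/125 <= u^3) by nra.
    assert (0 <= u^4) by nra. nra. }
  lra. Qed.

Lemma exp_bd y : -1/5 <= y <= 1/5 -> exp y <= 1 + y + 4/5*y^2.
Proof. intros H.
  assert (H1 := exp_ineq1_le (-(y/4))).
  assert (Ep: exp y * (exp (-(y/4)))^4 = 1).
  { rewrite exp_pow_mul, <- exp_plus. replace (INR 4) with 4 by (simpl; lra); replace (y + 4 * - (y/4)) with 0 by field. apply exp_0. }
  assert (P := poly_bd y H).
  assert (0 < 1 - y/4) by lra.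
  assert ((1 - y/4)^4 <= (exp (-(y/4)))^4) by (apply pow_incr; lra).
  assert (0 < (1 - y/4)^4) by (apply pow_lt; lra).
  assert (0 < exp y) by apply exp_pos.
  assert (0 <= 1 + y + 4/5*y^2) by nra.
  nra. Qed.

Definition lsumf {X : Type} (f : X -> R) (l : list X) : R := fold_right Rplus 0 (map f l).

Lemma lsumf_app {X} (f : X -> R) l1 l2 : lsumf f (l1 ++ l2) = lsumf f l1 + lsumf f l2.
Proof. induction l1; unfold lsumf in *; simpl. ring. rewrite IHl1; ring. Qed.

Lemma lsumf_le {X} (f g : X -> R) l : (forall x, f x <= g x) -> lsumf f l <= lsumf g l.
Proof. intros H; induction l; unfold lsumf in *; simpl. lra. specialize (H a); lra. Qed.

Lemma lsumf_ge0 {X} (f : X -> R) l : (forall x, 0 <= f x) -> 0 <= lsumf f l.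
Proof. intros H; induction l; unfold lsumf in *; simpl. lra. specialize (H a); lra. Qed.

Lemma lsumf_scal {X} c (f : X -> R) l : lsumf (fun x => c * f x) l = c * lsumf f l.
Proof. induction l; unfold lsumf in *; simpl. ring. rewrite IHl; ring. Qed.

Lemma lsumf_ext {X} (f g : X -> R) l : (forall x, f x = g x) -> lsumf f l = lsumf g l.
Proof. intros H; unfold lsumf; rewrite (map_ext f g H l); auto. Qed.

Lemma lsumf_flat {X Y} (f : Y -> R) (g : X -> list Y) l :
  lsumf f (flat_map g l) = lsumf (fun a => lsumf f (g a)) l.
Proof. induction l; simpl. reflexivity. rewrite lsumf_app, IHl. unfold lsumf; simpl. reflexivity. Qed.

Lemma lsumf_map {X Y} (f : Y -> R) (g : X -> Y) l : lsumf f (map g l) = lsumf (fun x => f (g x)) l.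
Proof. unfold lsumf; rewrite map_map; reflexivity. Qed.

Lemma seq_nonneg f lo r : (forall j, (lo <= j < lo + r)%nat -> 0 <= f j) ->
  0 <= fold_right Rplus 0 (map f (seq lo r)).
Proof. revert lo; induction r; intros lo H; simpl. lra.
  assert (0 <= f lo) by (apply H; lia).
  assert (0 <= fold_right Rplus 0 (map f (seq (S lo) r))) by (apply IHr; intros; apply H; lia). lra. Qed.

Lemma seq_lin c f g lo r :
  c * fold_right Rplus 0 (map f (seq lo r)) - fold_right Rplus 0 (map g (seq lo r))
  = fold_right Rplus 0 (map (fun k => c * f k - g k) (seq lo r)).
Proof. revert lo; induction r; intros lo; simpl. ring. rewrite <- IHr. ring. Qed.

Lemma seq_exp lam f lo r :
  exp (lam * fold_right Rplus 0 (map f (seq lo r)))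
  = fold_right Rmult 1 (map (fun k => exp (lam * f k)) (seq lo r)).
Proof. revert lo; induction r; intros lo; simpl. rewrite Rmult_0_r; apply exp_0.
  rewrite <- IHr, <- exp_plus. f_equal; ring. Qed.

Lemma count0 (u v : R) b W lo : (b < lo)%nat ->
  lsumf (fun a => if Nat.eq_dec a b then u else v) (seq lo W) = INR W * v.
Proof. revert lo; induction W; intros lo H; unfold lsumf in *; cbn [seq map fold_right]. simpl; ring.
  destruct (Nat.eq_dec lo b). lia. rewrite IHW by lia. rewrite S_INR. ring. Qed.

Lemma count1 (u v : R) b W lo : (lo <= b < lo + W)%nat ->
  lsumf (fun a => if Nat.eq_dec a b then u else v) (seq lo W) = u + (INR W - 1) * v.
Proof. revert lo; induction W; intros lo H. lia. unfold lsumf in *; cbn [seq map fold_right].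
  destruct (Nat.eq_dec lo b).
  - subst. pose proof (count0 u v b W (S b)) as C. unfold lsumf in C. rewrite C by lia.
    rewrite S_INR; ring.
  - rewrite IHW by lia. rewrite S_INR; ring. Qed.

Lemma find_bucket_bd e lo cnt v : find_bucket e lo cnt v = O \/ (find_bucket e lo cnt v < lo + cnt)%nat.
Proof. revert lo; induction cnt; intros lo; simpl. left; auto.
  destruct (in_bucket_dec e lo v). right; lia. destruct (IHcnt (S lo)); [left|right]; lia. Qed.

Lemma iterx_dep A m n eps ts ts' k :
  (forall j, (j < k)%nat -> nth j ts O = nth j ts' O) ->
  iterx A m n eps ts k = iterx A m n eps ts' k.
Proof. induction k; intros H; simpl. reflexivity.
  rewrite IHk by (intros; apply H; lia). rewrite (H k) by lia. reflexivity. Qed.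

Section Main.
Variables (A : nat -> nat -> R) (m n : nat) (eps : R) (i : nat).

Definition Dk (ts : list nat) (k : nat) : R :=
  (INR (w eps) * Defs.Zind A m n eps ts k i - 1) *
  (Rmin (grad A m n eps (iterx A m n eps ts k) i) 1 + eps).

Definition PE (lam : R) (ts : list nat) (lo r : nat) : R :=
  fold_right Rmult 1 (map (fun k => exp (lam * Dk ts k)) (seq lo r)).

Lemma Dk_dep p a s : Dk (p ++ a :: s) (length p) = Dk (p ++ [a]) (length p).
Proof. unfold Dk, Defs.Zind.
  rewrite (iterx_dep A m n eps (p ++ a :: s) (p ++ [a]) (length p)).
  2:{ intros j Hj. rewrite !app_nth1 by lia. reflexivity. }
  rewrite !nth_middle. reflexivity. Qed.

Lemma PE_S lam ts lo r : PE lam ts lo (S r) = exp (lam * Dk ts lo) * PE lam ts (S lo) r.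
Proof. reflexivity. Qed.

Lemma main_ind lam B :
  0 <= B ->
  (forall p, lsumf (fun a => exp (lam * Dk (p ++ [a]) (length p))) (seq 0 (w eps)) <= INR (w eps) * B) ->
  forall r p, lsumf (fun s => PE lam (p ++ s) (length p) r) (all_seqs (w eps) r) <= (INR (w eps) * B) ^ r.
Proof. intros HB Hmgf. induction r; intros p.
  - unfold lsumf; simpl. unfold PE; simpl. lra.
  - cbn [all_seqs]. rewrite lsumf_flat.
    assert (Hr : 0 <= (INR (w eps) * B) ^ r) by (apply pow_le; apply Rmult_le_pos; [apply pos_INR|auto]).
    apply Rle_trans with (lsumf (fun a => exp (lam * Dk (p ++ [a]) (length p)) * (INR (w eps) * B) ^ r) (seq 0 (w eps))).
    + apply lsumf_le. intros a. rewrite lsumf_map.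
      rewrite (lsumf_ext _ (fun s => exp (lam * Dk (p ++ [a]) (length p)) * PE lam ((p ++ [a]) ++ s) (length (p ++ [a])) r)).
      * rewrite lsumf_scal. apply Rmult_le_compat_l. left; apply exp_pos. apply IHr.
      * intros s. rewrite PE_S, Dk_dep. rewrite <- app_assoc. rewrite length_app. simpl.
        replace (length p + 1)%nat with (S (length p)) by lia. reflexivity.
    + rewrite (lsumf_ext _ (fun a => (INR (w eps) * B) ^ r * exp (lam * Dk (p ++ [a]) (length p)))) by (intros; ring).
      rewrite lsumf_scal. simpl. specialize (Hmgf p). 
      rewrite (Rmult_comm (INR (w eps) * B)). apply Rmult_le_compat_l; auto.
Qed.


Lemma grad_ge p : valid_matrix A m n -> (i < n)%nat -> -1 <= grad A m n eps p i.
Proof. intros [HA _] Hi. unfold grad, rsum.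
  assert (0 <= fold_right Rplus 0 (map (fun j => A j i * pj A m n eps p j) (seq 0 m))).
  { apply seq_nonneg. intros j Hj. apply Rmult_le_pos. apply HA; lia. left; apply exp_pos. }
  lra. Qed.

Lemma mgf lam p : 0 <= lam -> (1 <= w eps)%nat -> 0 < eps -> valid_matrix A m n -> (i < n)%nat ->
  lam * (1 + eps) * (INR (w eps) - 1) <= 1/5 ->
  ((2 <= w eps)%nat -> lam * (1 + eps) <= 1/5) ->
  lsumf (fun a => exp (lam * Dk (p ++ [a]) (length p))) (seq 0 (w eps))
  <= INR (w eps) * (1 + 4/5 * lam^2 * (1 + eps)^2 * (INR (w eps) - 1)).
Proof. intros Hl HW He HV Hi Hy1 Hy2.
  set (xx := iterx A m n eps p (length p)).
  set (g := grad A m n eps xx i).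
  set (x := Rmin g 1 + eps).
  set (b := bucket eps (xi A m n eps xx i)).
  set (U := exp (lam * ((INR (w eps) * 1 - 1) * x))).
  set (V := exp (lam * ((INR (w eps) * 0 - 1) * x))).
  rewrite (lsumf_ext _ (fun a => if Nat.eq_dec a b then U else V)).
  2:{ intros a. unfold Dk, Defs.Zind.
      rewrite (iterx_dep A m n eps (p ++ [a]) p (length p)) by (intros j Hj; rewrite app_nth1 by lia; reflexivity).
      rewrite nth_middle. fold xx. fold b. fold g. fold x.
      destruct (Nat.eq_dec a b); reflexivity. }
  assert (Hb : (b < w eps)%nat).
  { unfold b, bucket. destruct (Req_EM_T _ 0). lia.
    destruct (find_bucket_bd eps 0 (w eps) (xi A m n eps xx i)) as [E|E]; [rewrite E; lia | lia]. }
  rewrite count1 by lia.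
  assert (Hg := grad_ge xx HV Hi). fold g in Hg.
  assert (Hx1 : -1 + eps <= x <= 1 + eps).
  { unfold x, Rmin. destruct (Rle_dec g 1); lra. }
  set (Wr := INR (w eps)).
  assert (HW1 : 1 <= Wr) by (unfold Wr; apply (le_INR 1); auto).
  fold Wr in U, V, Hy1.
  assert (Hc1 : 0 <= lam * (Wr - 1)) by (apply Rmult_le_pos; lra).
  assert (HU : U <= 1 + lam * ((Wr * 1 - 1) * x) + 4/5 * (lam * ((Wr * 1 - 1) * x))^2).
  { apply exp_bd.
    replace (lam * ((Wr * 1 - 1) * x)) with ((lam * (Wr - 1)) * x) by ring.
    split; nra. }
  assert (HV2 : (Wr - 1) * V <= (Wr - 1) * (1 + lam * ((Wr * 0 - 1) * x) + 4/5 * (lam * ((Wr * 0 - 1) * x))^2)).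
  { destruct (Nat.eq_dec (w eps) 1) as [E|E].
    - unfold Wr; rewrite E; simpl; lra.
    - apply Rmult_le_compat_l. lra. apply exp_bd.
      assert (lam * (1 + eps) <= 1/5) by (apply Hy2; lia).
      replace (lam * ((Wr * 0 - 1) * x)) with (- (lam * x)) by ring.
      split; nra. }
  assert (0 <= lam ^ 2) by nra.
  assert (x ^ 2 <= (1 + eps) ^ 2) by nra.
  assert (0 <= Wr * (Wr - 1)) by nra.
  assert (lam^2 * x^2 * (Wr * (Wr - 1)) <= lam^2 * (1+eps)^2 * (Wr * (Wr - 1))).
  { apply Rmult_le_compat_r; auto. apply Rmult_le_compat_l; auto. }
  replace (Wr * (1 + 4/5 * lam^2 * (1+eps)^2 * (Wr - 1))) with
     (Wr + 4/5 * (lam^2 * (1+eps)^2 * (Wr * (Wr - 1)))) by ring.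
  assert (E2: 1 + lam * ((Wr * 1 - 1) * x) + 4/5 * (lam * ((Wr * 1 - 1) * x))^2 +
     (Wr - 1) * (1 + lam * ((Wr * 0 - 1) * x) + 4/5 * (lam * ((Wr * 0 - 1) * x))^2)
     = Wr + 4/5 * (lam^2 * x^2 * (Wr * (Wr - 1)))) by ring.
  lra.
Qed.

End Main.

Lemma w_ge1 eps : 0 < eps <= 1/2 -> (1 <= w eps)%nat.
Proof. intros He. unfold w, Rceil, log2.
  assert (Hl2 : 0 < ln 2) by (rewrite <- ln_1; apply ln_increasing; lra).
  assert (H2 : ln 2 <= ln (1/eps)).
  { destruct (Req_dec (1/eps) 2) as [E|E]. rewrite E; lra.
    left; apply ln_increasing. lra.
    assert (2 * eps <= 1) by lra. assert (1/eps >= 2). { apply Rle_ge. apply Rmult_le_reg_r with eps. lra. field_simplify; lra. }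
    lra. }
  assert (Hx : 1 <= ln (1/eps) / ln 2).
  { apply Rmult_le_reg_r with (ln 2). lra. field_simplify; lra. }
  destruct (base_Int_part (- (ln (1/eps) / ln 2))) as [H1 _].
  assert (Hz : (Int_part (- (ln (1 / eps) / ln 2)) <= -1)%Z).
  { apply le_IZR. rewrite IZR_NEG. simpl. lra. }
  lia. Qed.

Theorem lemma4p3 (A : nat -> nat -> R) (m n : nat) (eps : R) (T : nat) :
  valid_matrix A m n ->
  0 < eps <= 1 / 2 ->
  INR T >= 2 * INR (w eps) ^ 2 * ln (INR n / eps) / eps ^ 2 ->
  forall i : nat, (i < n)%nat ->
    prob_unif (w eps) T
      (fun ts => Rgeb (S_i A m n eps T ts i - U_i A m n eps T ts i) (eps * INR T))
    <= eps / INR n.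
Proof.
  intros HV He HT i Hi.
  assert (HW := w_ge1 eps He).
  set (Wr := INR (w eps)) in *.
  assert (HW1 : 1 <= Wr) by (unfold Wr; apply (le_INR 1); auto).
  set (lam := eps / Wr^2).
  assert (Hlam : lam * Wr^2 = eps) by (unfold lam; field; lra).
  assert (Hlam0 : 0 <= lam) by (unfold lam; apply Rmult_le_pos; [lra| left; apply Rinv_0_lt_compat; nra]).
  assert (Hlw : lam * (Wr - 1) <= eps / 4).
  { assert (4 * (Wr - 1) <= Wr^2) by (assert (0 <= (Wr-2)^2) by apply pow2_ge_0; nra).
    assert (lam * (4 * (Wr - 1)) <= lam * Wr^2) by (apply Rmult_le_compat_l; auto). lra. }
  assert (Hl4 : (2 <= w eps)%nat -> lam <= eps / 4).
  { intros H2. assert (2 <= Wr) by (unfold Wr; apply (le_INR 2); auto).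
    assert (4 <= Wr^2) by nra.
    assert (lam * 4 <= lam * Wr^2) by (apply Rmult_le_compat_l; auto). lra. }
  set (B := 1 + 4/5 * lam^2 * (1 + eps)^2 * (Wr - 1)).
  assert (HB0 : 0 <= B).
  { unfold B. assert (0 <= lam^2) by nra. assert (0 <= (1+eps)^2) by nra.
    assert (0 <= lam ^ 2 * (1 + eps) ^ 2 * (Wr - 1)) by (apply Rmult_le_pos; [apply Rmult_le_pos|]; lra). lra. }
  assert (Hmgf : forall p, lsumf (fun a => exp (lam * Dk A m n eps i (p ++ [a]) (length p))) (seq 0 (w eps)) <= INR (w eps) * B).
  { intros p. apply mgf; auto. lra.
    - fold Wr. assert (lam * (1 + eps) * (Wr - 1) = (lam * (Wr - 1)) * (1 + eps)) by ring. nra.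
    - intros H2. specialize (Hl4 H2). nra. }
  assert (HM := main_ind A m n eps i lam B HB0 Hmgf T []).
  simpl in HM. fold Wr in HM.
  (* Markov *)
  assert (HWT : 0 < Wr ^ T) by (apply pow_lt; lra).
  unfold prob_unif. fold Wr.
  change (fold_right Rplus 0 (map (fun ts => if Rgeb (S_i A m n eps T ts i - U_i A m n eps T ts i) (eps * INR T) then 1 else 0) (all_seqs (w eps) T)))
    with (lsumf (fun ts => if Rgeb (S_i A m n eps T ts i - U_i A m n eps T ts i) (eps * INR T) then 1 else 0) (all_seqs (w eps) T)).
  assert (Hpt : forall ts, (if Rgeb (S_i A m n eps T ts i - U_i A m n eps T ts i) (eps * INR T) then 1 else 0)
                 <= exp (- (lam * (eps * INR T))) * PE A m n eps i lam ts 0 T).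
  { intros ts.
    assert (ESU : S_i A m n eps T ts i - U_i A m n eps T ts i = fold_right Rplus 0 (map (Dk A m n eps i ts) (seq 0 T))).
    { unfold S_i, U_i, rsum. rewrite seq_lin. f_equal. apply map_ext. intros k. unfold Dk. ring. }
    assert (EP : PE A m n eps i lam ts 0 T = exp (lam * (S_i A m n eps T ts i - U_i A m n eps T ts i))).
    { rewrite ESU, seq_exp. reflexivity. }
    rewrite EP, <- exp_plus. unfold Rgeb.
    destruct (Rle_dec (eps * INR T) (S_i A m n eps T ts i - U_i A m n eps T ts i)).
    - apply Rle_trans with (1 + (- (lam * (eps * INR T)) + lam * (S_i A m n eps T ts i - U_i A m n eps T ts i))).
      2: apply exp_ineq1_le.
      assert (0 <= lam * (S_i A m n eps T ts i - U_i A m n eps T ts i - eps * INR T)) by (apply Rmult_le_pos; lra).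
      lra.
    - left; apply exp_pos. }
  assert (Hsum : lsumf (fun ts => if Rgeb (S_i A m n eps T ts i - U_i A m n eps T ts i) (eps * INR T) then 1 else 0) (all_seqs (w eps) T)
                 <= exp (- (lam * (eps * INR T))) * (Wr * B) ^ T).
  { eapply Rle_trans. apply lsumf_le. exact Hpt.
    rewrite lsumf_scal. apply Rmult_le_compat_l. left; apply exp_pos. exact HM. }
  apply Rle_trans with (exp (- (lam * (eps * INR T))) * B ^ T).
  { unfold Rdiv. apply Rmult_le_reg_r with (Wr ^ T); auto.
    rewrite Rmult_assoc, Rinv_l by lra. rewrite Rmult_1_r.
    rewrite Rpow_mult_distr in Hsum. lra. }
  assert (HBe : B ^ T <= exp (INR T * (4/5 * lam^2 * (1 + eps)^2 * (Wr - 1)))).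
  { rewrite <- exp_pow_mul. apply pow_incr. split; auto. unfold B. apply exp_ineq1_le. }
  assert (Hn : 1 <= INR n) by (apply (le_INR 1); lia).
  set (L := ln (INR n / eps)) in *.
  assert (HL : 0 <= L).
  { unfold L. rewrite <- ln_1. destruct (Req_dec 1 (INR n / eps)) as [E|E]. rewrite E; lra.
    left; apply ln_increasing. lra.
    assert (INR n / eps * eps = INR n) by (field; lra). nra. }
  assert (HeL : exp (- L) = eps / INR n).
  { unfold L. rewrite exp_Ropp, exp_ln. field; lra. unfold Rdiv. apply Rmult_lt_0_compat. lra. apply Rinv_0_lt_compat; lra. }
  rewrite <- HeL.
  apply Rle_trans with (exp (- (lam * (eps * INR T))) * exp (INR T * (4/5 * lam^2 * (1 + eps)^2 * (Wr - 1)))).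
  { apply Rmult_le_compat_l. left; apply exp_pos. exact HBe. }
  rewrite <- exp_plus. apply exp_le_mono.
  assert (HT0 : 0 <= INR T) by apply pos_INR.
  assert (HTe : INR T * eps^2 >= 2 * Wr^2 * L).
  { assert (E : 2 * Wr^2 * L / eps^2 * eps^2 = 2 * Wr^2 * L) by (field; lra).
    assert (0 < eps^2) by nra. nra. }
  assert (HTl : lam * eps * INR T >= 2 * L).
  { assert (0 < Wr^2) by nra.
    assert (lam * eps * INR T * Wr^2 = INR T * eps^2) by (rewrite <- Hlam; ring). nra. }
  assert (HK : INR T * (4/5 * lam^2 * (1 + eps)^2 * (Wr - 1)) <= 9/20 * (lam * eps * INR T)).
  { assert ((1+eps)^2 <= 9/4) by nra.
    assert (0 <= lam * INR T) by nra.
    assert (INR T * (4/5 * lam^2 * (1 + eps)^2 * (Wr - 1)) = 4/5 * (lam * INR T) * (1+eps)^2 * (lam * (Wr - 1))) by ring.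
    assert (0 <= lam * (Wr - 1)) by nra.
    assert ((1+eps)^2 * (lam * (Wr - 1)) <= 9/4 * (eps/4)).
    { apply Rmult_le_compat; nra. }
    nra. }
  nra.
Qed.
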